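(* Let $f=u+iv$ be polar-analytic on an open neighbourhood $\mathcal D\subset\mathbb H$ of $(r_0,\theta_0)$, with $(D_{\rm pol}f)(r_0,\theta_0)\neq0$. For $j=1,2$ let $\gamma_j$ be a $C^1$ curve in $\mathcal D$ with $\gamma_j(0)=(r_0,\theta_0)$ and tangent vector $\gamma_j'(0)$ a positive multiple of $(\cos\phi_j,\sin\phi_j)$, where $\phi_j\in\,]-\pi/2,\pi/2]$; let $\alpha\in[0,\pi]$ be the angle between these tangent vectors, so $\cos\alpha=\cos(\phi_2-\phi_1)$. Then the curves $f\circ\gamma_1$ and $f\circ\gamma_2$ (viewed in $\mathbb R^2\cong\mathbb C$) have nonzero tangent vectors at $t=0$, and the angle $\beta\in[0,\pi]$ between them satisfies $$\cos\beta=\frac{c_1c_2+r_0^2s_1s_2}{\sqrt{c_1^2+r_0^2s_1^2}\,\sqrt{c_2^2+r_0^2s_2^2}},\qquad c_j=\cos\phi_j,\ s_j=\sin\phi_j.$$ In particular $\beta$ depends only on $r_0,\phi_1,\phi_2$ and not on $f$ or $\theta_0$, and $\beta=\alpha$ when $r_0=1$.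
   Context: $\mathbb H:=\{(r,\theta): r>0,\ \theta\in\mathbb R\}$. A function $f:\mathcal D\to\mathbb C$ on an open set $\mathcal D\subset\mathbb H$ is called polar-analytic on $\mathcal D$ if for every $(r_0,\theta_0)\in\mathcal D$ the limit $$(D_{\rm pol}f)(r_0,\theta_0):=\lim_{(r,\theta)\to(r_0,\theta_0)}\frac{f(r,\theta)-f(r_0,\theta_0)}{re^{i\theta}-r_0e^{i\theta_0}}$$ exists (with $(r,\theta)\in\mathcal D$, $re^{i\theta}\neq r_0e^{i\theta_0}$), independently of how $(r,\theta)$ approaches $(r_0,\theta_0)$ within $\mathcal D$. The angle between two nonzero vectors $x,y\in\mathbb R^2$ is the unique $\beta\in[0,\pi]$ with $\cos\beta=\langle x,y\rangle/(\|x\|_2\|y\|_2)$. *)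

(* Defs.v *)
From Stdlib Require Import Reals Lra.
Open Scope R_scope.

(* points of H are pairs (r, theta); complex values are pairs (re, im) *)
Definition cnorm (z : R * R) : R := sqrt (fst z ^ 2 + snd z ^ 2).
Definition csub (z w : R * R) : R * R := (fst z - fst w, snd z - snd w).
Definition cdiv (z w : R * R) : R * R :=
  let d := fst w ^ 2 + snd w ^ 2 in
  ((fst z * fst w + snd z * snd w) / d, (snd z * fst w - fst z * snd w) / d).
Definition polar_pt (r theta : R) : R * R := (r * cos theta, r * sin theta).

Definition dist2 (p q : R * R) : R := cnorm (csub p q).

Definition open_in_H (D : R -> R -> Prop) : Prop :=
  (forall r th, D r th -> 0 < r) /\
  (forall r th, D r th -> exists eps, 0 < eps /\
     forall r' th', dist2 (r', th') (r, th) < eps -> D r' th').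

Definition has_Dpol (D : R -> R -> Prop) (f : R -> R -> R * R)
    (r0 th0 : R) (L : R * R) : Prop :=
  forall eps, 0 < eps -> exists delta, 0 < delta /\
    forall r th, D r th -> dist2 (r, th) (r0, th0) < delta ->
      polar_pt r th <> polar_pt r0 th0 ->
      cnorm (csub (cdiv (csub (f r th) (f r0 th0))
                        (csub (polar_pt r th) (polar_pt r0 th0))) L) < eps.

Definition polar_analytic (D : R -> R -> Prop) (f : R -> R -> R * R) : Prop :=
  forall r0 th0, D r0 th0 -> exists L, has_Dpol D f r0 th0 L.

Definition C1_curve_in (D : R -> R -> Prop) (a : R) (g1 g2 : R -> R) : Prop :=
  0 < a /\
  exists g1' g2' : R -> R,
    forall t, -a < t < a ->
      D (g1 t) (g2 t) /\
      derivable_pt_lim g1 t (g1' t) /\ derivable_pt_lim g2 t (g2' t) /\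
      continuity_pt g1' t /\ continuity_pt g2' t.

Definition dot2 (x y : R * R) : R := fst x * fst y + snd x * snd y.

Definition vec_angle (x y : R * R) : R := acos (dot2 x y / (cnorm x * cnorm y)).

(* Main.v *)
Require Import Defs.
From Stdlib Require Import Reals Lra Psatz Classical.
Open Scope R_scope.

Definition cmul (x y : R * R) : R * R :=
  (fst x * fst y - snd x * snd y, fst x * snd y + snd x * fst y).

Lemma cnorm_pos x : x <> (0,0) -> 0 < cnorm x.
Proof.
  destruct x as [a b]; intro H; unfold cnorm; simpl.
  apply sqrt_lt_R0.
  destruct (Req_dec a 0) as [->|Ha].
  - destruct (Req_dec b 0) as [->|Hb]; [congruence|nra].
  - nra.
Qed.

Lemma cnorm_ge0 x : 0 <= cnorm x.
Proof. unfold cnorm; apply sqrt_pos. Qed.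

Lemma cnorm_sq x : cnorm x ^ 2 = fst x ^ 2 + snd x ^ 2.
Proof. unfold cnorm; rewrite pow2_sqrt; [auto|nra]. Qed.

Lemma cnorm_cmul x y : cnorm (cmul x y) = cnorm x * cnorm y.
Proof.
  unfold cnorm, cmul; simpl. rewrite <- sqrt_mult by nra. f_equal; ring.
Qed.

Lemma cmul_nz x y : x <> (0,0) -> y <> (0,0) -> cmul x y <> (0,0).
Proof.
  intros Hx Hy E. pose proof (cnorm_pos _ Hx); pose proof (cnorm_pos _ Hy).
  assert (cnorm (cmul x y) = 0) by (rewrite E; unfold cnorm; cbn [fst snd];
    replace (0^2+0^2) with 0 by ring; apply sqrt_0).
  rewrite cnorm_cmul in H1. nra.
Qed.

Lemma ratio_cmul M x y : M <> (0,0) -> x <> (0,0) -> y <> (0,0) ->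
  dot2 (cmul M x) (cmul M y) / (cnorm (cmul M x) * cnorm (cmul M y)) =
  dot2 x y / (cnorm x * cnorm y).
Proof.
  intros HM Hx Hy. rewrite !cnorm_cmul.
  pose proof (cnorm_pos _ HM); pose proof (cnorm_pos _ Hx); pose proof (cnorm_pos _ Hy).
  assert (E : dot2 (cmul M x) (cmul M y) = cnorm M ^ 2 * dot2 x y).
  { rewrite cnorm_sq. unfold dot2, cmul; simpl; ring. }
  rewrite E. field. lra.
Qed.

Lemma ratio_bound x y : x <> (0,0) -> y <> (0,0) ->
  -1 <= dot2 x y / (cnorm x * cnorm y) <= 1.
Proof.
  intros Hx Hy. pose proof (cnorm_pos _ Hx) as P1; pose proof (cnorm_pos _ Hy) as P2.
  pose proof (cnorm_sq x) as S1; pose proof (cnorm_sq y) as S2.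
  assert (CS : dot2 x y ^ 2 <= (cnorm x * cnorm y) ^ 2).
  { rewrite Rpow_mult_distr, S1, S2. destruct x as [a b], y as [c d];
    unfold dot2; simpl. pose proof (pow2_ge_0 (a*d-b*c)). nra. }
  set (n := cnorm x * cnorm y) in *. set (d := dot2 x y) in *.
  assert (0 < n) by (unfold n; nra).
  assert (-n <= d <= n) by nra.
  split.
  - apply (Rmult_le_reg_r n); [lra|]. unfold Rdiv; rewrite Rmult_assoc, Rinv_l; lra.
  - apply (Rmult_le_reg_r n); [lra|]. unfold Rdiv; rewrite Rmult_assoc, Rinv_l; lra.
Qed.

Lemma one_lt_PI : 1 < PI.
Proof. pose proof PI2_1; pose proof PI2_Rlt_PI; lra. Qed.

Lemma comp_le1 z : Rabs (fst z) <= cnorm z.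
Proof.
  unfold cnorm. rewrite <- (sqrt_pow2 (Rabs (fst z))) by apply Rabs_pos.
  apply sqrt_le_1_alt. rewrite pow2_abs. pose proof (pow2_ge_0 (snd z)); lra.
Qed.

Lemma comp_le2 z : Rabs (snd z) <= cnorm z.
Proof.
  unfold cnorm. rewrite <- (sqrt_pow2 (Rabs (snd z))) by apply Rabs_pos.
  apply sqrt_le_1_alt. rewrite pow2_abs. pose proof (pow2_ge_0 (fst z)); lra.
Qed.

Lemma dist2_le x y : cnorm (x, y) <= Rabs x + Rabs y.
Proof.
  unfold cnorm; simpl fst; simpl snd.
  rewrite <- (sqrt_pow2 (Rabs x + Rabs y)) by (pose proof (Rabs_pos x); pose proof (Rabs_pos y); lra).
  apply sqrt_le_1_alt. rewrite <- (pow2_abs x), <- (pow2_abs y).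
  pose proof (Rabs_pos x); pose proof (Rabs_pos y); nra.
Qed.

Lemma cont_of_deriv g d : derivable_pt_lim g 0 d ->
  forall eps, 0 < eps -> exists del, 0 < del /\ forall h, Rabs h < del -> Rabs (g h - g 0) < eps.
Proof.
  intros Hg eps He. destruct (Hg 1 Rlt_0_1) as [d0 Hd0].
  pose proof (cond_pos d0). pose proof (Rabs_pos d).
  exists (Rmin d0 (eps / (Rabs d + 1))). split.
  { apply Rmin_pos; [lra|]. apply Rdiv_lt_0_compat; lra. }
  intros h Hh. destruct (Req_dec h 0) as [->|Hn].
  { replace (g 0 - g 0) with 0 by ring. rewrite Rabs_R0; lra. }
  assert (Hh1 : Rabs h < d0) by (eapply Rlt_le_trans; [apply Hh| apply Rmin_l]).
  assert (Hh2 : Rabs h < eps / (Rabs d + 1)) by (eapply Rlt_le_trans; [apply Hh| apply Rmin_r]).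
  specialize (Hd0 h Hn Hh1). rewrite Rplus_0_l in Hd0.
  assert (E : g h - g 0 = h * ((g h - g 0) / h)) by (field; auto).
  rewrite E, Rabs_mult.
  assert (Rabs ((g h - g 0) / h) < Rabs d + 1).
  { pose proof (Rabs_triang ((g h - g 0) / h - d) d).
    replace ((g h - g 0) / h - d + d) with ((g h - g 0) / h) in H1 by ring. lra. }
  apply Rmult_lt_compat_r with (r := Rabs d + 1) in Hh2; [|lra].
  unfold Rdiv in Hh2. rewrite Rmult_assoc, Rinv_l in Hh2 by lra.
  pose proof (Rabs_pos h); pose proof (Rabs_pos ((g h - g 0) / h)). nra.
Qed.

Lemma polar_inj r th r0 th0 : 0 < r -> 0 < r0 -> Rabs (th - th0) < 1 ->
  r * cos th = r0 * cos th0 -> r * sin th = r0 * sin th0 -> r = r0 /\ th = th0.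
Proof.
  intros Hr Hr0 Ht Hc Hs.
  pose proof (sin2_cos2 th) as E1; pose proof (sin2_cos2 th0) as E2. unfold Rsqr in *.
  assert (Q : (r*cos th)*(r*cos th) + (r*sin th)*(r*sin th) = (r0*cos th0)*(r0 *cos th0)+ (r0*sin th0)*(r0*sin th0)) by (rewrite Hc, Hs; ring).
  replace ((r*cos th)*(r*cos th) + (r*sin th)*(r*sin th)) with (r*r*(sin th * sin th + cos th * cos th)) in Q by ring.
  replace ((r0*cos th0)*(r0*cos th0) + (r0*sin th0)*(r0*sin th0)) with (r0*r0*(sin th0 * sin th0 + cos th0 * cos th0)) in Q by ring.
  rewrite E1, E2 in Q.
  assert (r = r0) by nra. subst r0. split; [auto|].
  assert (Ec : cos th = cos th0) by (apply (Rmult_eq_reg_l r); lra).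
  assert (Es : sin th = sin th0) by (apply (Rmult_eq_reg_l r); lra).
  pose proof one_lt_PI.
  destruct (Rtotal_order th th0) as [Hlt|[Heq|Hgt]]; auto; exfalso.
  - assert (S : 0 < sin (th0 - th)) by (apply sin_gt_0; apply Rabs_def2 in Ht; lra).
    rewrite sin_minus in S. rewrite Ec, Es in S. lra.
  - assert (S : 0 < sin (th - th0)) by (apply sin_gt_0; apply Rabs_def2 in Ht; lra).
    rewrite sin_minus in S. rewrite Ec, Es in S. lra.
Qed.

Lemma bound4 e1 e2 d1 d2 qa qb La Lb eta A B :
  Rabs e1 <= eta -> Rabs e2 <= eta -> Rabs d1 <= eta -> Rabs d2 <= eta ->
  Rabs qa <= A -> Rabs qb <= B ->
  Rabs (e1 * qa + e2 * qb + La * d1 + Lb * d2) <= eta * (A + B + Rabs La + Rabs Lb).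
Proof.
  intros. eapply Rle_trans; [apply Rabs_triang|].
  eapply Rle_trans; [apply Rplus_le_compat_r; apply Rabs_triang|].
  eapply Rle_trans; [apply Rplus_le_compat_r; apply Rplus_le_compat_r; apply Rabs_triang|].
  rewrite !Rabs_mult.
  pose proof (Rabs_pos e1); pose proof (Rabs_pos e2); pose proof (Rabs_pos qa);
  pose proof (Rabs_pos qb); pose proof (Rabs_pos La); pose proof (Rabs_pos Lb);
  pose proof (Rabs_pos d1); pose proof (Rabs_pos d2).
  assert (Rabs e1 * Rabs qa <= eta * A) by (apply Rmult_le_compat; lra).
  assert (Rabs e2 * Rabs qb <= eta * B) by (apply Rmult_le_compat; lra).
  assert (Rabs La * Rabs d1 <= Rabs La * eta) by (apply Rmult_le_compat_l; lra).
  assert (Rabs Lb * Rabs d2 <= Rabs Lb * eta) by (apply Rmult_le_compat_l; lra).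
  lra.
Qed.

Lemma sq0 x : x ^ 2 = 0 -> x = 0.
Proof. intro H; destruct (Req_dec x 0) as [|Hn]; auto; exfalso; exact (pow_nonzero x 2 Hn H). Qed.

Lemma keyK D f r0 th0 L a g1 g2 d1 d2 :
  (forall r th, D r th -> 0 < r) -> 0 < r0 -> has_Dpol D f r0 th0 L -> 0 < a ->
  (forall t, -a < t < a -> D (g1 t) (g2 t)) -> g1 0 = r0 -> g2 0 = th0 ->
  derivable_pt_lim g1 0 d1 -> derivable_pt_lim g2 0 d2 ->
  forall eta, 0 < eta -> exists del, 0 < del /\ forall h, Rabs h < del ->
   exists e1 e2, Rabs e1 < eta /\ Rabs e2 < eta /\
    fst (f (g1 h) (g2 h)) - fst (f r0 th0) =
      (fst L + e1) * (g1 h * cos (g2 h) - r0 * cos th0) - (snd L + e2) * (g1 h * sin (g2 h) - r0 * sin th0) /\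
    snd (f (g1 h) (g2 h)) - snd (f r0 th0) =
      (fst L + e1) * (g1 h * sin (g2 h) - r0 * sin th0) + (snd L + e2) * (g1 h * cos (g2 h) - r0 * cos th0).
Proof.
  intros Dpos Hr0 HL Ha HD E1 E2 Hd1 Hd2 eta Heta.
  destruct (HL eta Heta) as [del1 [Hdel1 HL1]].
  destruct (cont_of_deriv _ _ Hd1 (del1/2)) as [a1 [Ha1 C1]]; [lra|].
  destruct (cont_of_deriv _ _ Hd2 (Rmin (del1/2) (1/2))) as [a2 [Ha2 C2]].
  { apply Rmin_pos; lra. }
  exists (Rmin a (Rmin a1 a2)). split.
  { repeat apply Rmin_pos; lra. }
  intros h Hh.
  pose proof (Rmin_l a (Rmin a1 a2)). pose proof (Rmin_r a (Rmin a1 a2)).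
  pose proof (Rmin_l a1 a2). pose proof (Rmin_r a1 a2).
  assert (HDh : D (g1 h) (g2 h)) by (apply HD; pose proof (Rabs_def2 h a ltac:(lra)); lra).
  assert (B1 : Rabs (g1 h - r0) < del1/2) by (rewrite <- E1; apply C1; lra).
  assert (B2 : Rabs (g2 h - th0) < Rmin (del1/2) (1/2)) by (rewrite <- E2; apply C2; lra).
  pose proof (Rmin_l (del1/2) (1/2)). pose proof (Rmin_r (del1/2) (1/2)).
  assert (Hdist : dist2 (g1 h, g2 h) (r0, th0) < del1).
  { unfold dist2, csub; simpl fst; simpl snd.
    eapply Rle_lt_trans; [apply dist2_le|]. lra. }
  pose proof (Dpos _ _ HDh) as Hgpos.
  destruct (classic (polar_pt (g1 h) (g2 h) = polar_pt r0 th0)) as [Heq|Hne].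
  - unfold polar_pt in Heq. injection Heq as Hc Hs.
    destruct (polar_inj (g1 h) (g2 h) r0 th0 Hgpos Hr0 ltac:(lra) Hc Hs) as [-> ->].
    exists 0, 0. rewrite Rabs_R0. split; [lra|]. split; [lra|]. split; ring.
  - specialize (HL1 _ _ HDh Hdist Hne).
    set (Q := cdiv (csub (f (g1 h) (g2 h)) (f r0 th0)) (csub (polar_pt (g1 h) (g2 h)) (polar_pt r0 th0))) in *.
    exists (fst Q - fst L), (snd Q - snd L).
    pose proof (comp_le1 (csub Q L)) as K1. pose proof (comp_le2 (csub Q L)) as K2.
    change (fst (csub Q L)) with (fst Q - fst L) in K1. change (snd (csub Q L)) with (snd Q - snd L) in K2.
    split; [lra|]. split; [lra|].
    assert (Hn : (g1 h * cos (g2 h) - r0 * cos th0) ^ 2 + (g1 h * sin (g2 h) - r0 * sin th0) ^ 2 <> 0).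
    { intro Z. apply Hne. unfold polar_pt.
      pose proof (pow2_ge_0 (g1 h * cos (g2 h) - r0 * cos th0)).
      pose proof (pow2_ge_0 (g1 h * sin (g2 h) - r0 * sin th0)).
      assert (Z1 : (g1 h * cos (g2 h) - r0 * cos th0)^2 = 0) by lra.
      assert (Z2 : (g1 h * sin (g2 h) - r0 * sin th0)^2 = 0) by lra.
      apply sq0 in Z1. apply sq0 in Z2.
      f_equal; lra. }
    unfold Q, cdiv, csub, polar_pt; simpl fst; simpl snd.
    split; field; intro Z; apply Hn; rewrite <- Z; ring.
Qed.

Lemma near_bound q p eta : Rabs (q - p) < Rmin eta 1 -> Rabs (q - p) <= eta /\ Rabs q <= Rabs p + 1.
Proof.
  intro H. pose proof (Rmin_l eta 1); pose proof (Rmin_r eta 1). split; [lra|].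
  pose proof (Rabs_triang (q - p) p). replace (q - p + p) with q in H2 by ring. lra.
Qed.

Lemma chain D f r0 th0 L a g1 g2 d1 d2 :
  (forall r th, D r th -> 0 < r) -> 0 < r0 -> has_Dpol D f r0 th0 L -> 0 < a ->
  (forall t, -a < t < a -> D (g1 t) (g2 t)) -> g1 0 = r0 -> g2 0 = th0 ->
  derivable_pt_lim g1 0 d1 -> derivable_pt_lim g2 0 d2 ->
  derivable_pt_lim (fun t => fst (f (g1 t) (g2 t))) 0
     (fst (cmul L (cmul (cos th0, sin th0) (d1, r0 * d2)))) /\
  derivable_pt_lim (fun t => snd (f (g1 t) (g2 t))) 0
     (snd (cmul L (cmul (cos th0, sin th0) (d1, r0 * d2)))).
Proof.
  intros Dpos Hr0 HL Ha HD E1 E2 Hd1 Hd2.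
  set (p := cmul (cos th0, sin th0) (d1, r0 * d2)).
  assert (HP1 : derivable_pt_lim (fun t => g1 t * cos (g2 t)) 0 (fst p)).
  { replace (fst p) with (d1 * cos (g2 0) + g1 0 * (- sin (g2 0) * d2))
      by (rewrite E1, E2; unfold p, cmul; simpl; ring).
    exact (derivable_pt_lim_mult g1 (fun t => cos (g2 t)) 0 _ _ Hd1
             (derivable_pt_lim_comp g2 cos 0 _ _ Hd2 (derivable_pt_lim_cos _))). }
  assert (HP2 : derivable_pt_lim (fun t => g1 t * sin (g2 t)) 0 (snd p)).
  { replace (snd p) with (d1 * sin (g2 0) + g1 0 * (cos (g2 0) * d2))
      by (rewrite E1, E2; unfold p, cmul; simpl; ring).
    exact (derivable_pt_lim_mult g1 (fun t => sin (g2 t)) 0 _ _ Hd1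
             (derivable_pt_lim_comp g2 sin 0 _ _ Hd2 (derivable_pt_lim_sin _))). }
  set (K := Rabs (fst p) + 1 + (Rabs (snd p) + 1) + Rabs (fst L) + Rabs (snd L)).
  assert (HK : 0 < K) by (unfold K; pose proof (Rabs_pos (fst p)); pose proof (Rabs_pos (snd p));
    pose proof (Rabs_pos (fst L)); pose proof (Rabs_pos (snd L)); lra).
  assert (MAIN : forall eps, 0 < eps -> exists delta : posreal, forall h, h <> 0 -> Rabs h < delta ->
     Rabs ((fst (f (g1 h) (g2 h)) - fst (f r0 th0)) / h - fst (cmul L p)) < eps /\
     Rabs ((snd (f (g1 h) (g2 h)) - snd (f r0 th0)) / h - snd (cmul L p)) < eps).
  { intros eps Heps.
    set (eta := eps / (2 * K)).
    assert (Heta : 0 < eta) by (unfold eta; apply Rdiv_lt_0_compat; lra).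
    assert (HetaK : eta * K = eps / 2) by (unfold eta; field; lra).
    assert (Hm : 0 < Rmin eta 1) by (apply Rmin_pos; lra).
    destruct (HP1 _ Hm) as [dp1 Hdp1]. destruct (HP2 _ Hm) as [dp2 Hdp2].
    destruct (keyK D f r0 th0 L a g1 g2 d1 d2 Dpos Hr0 HL Ha HD E1 E2 Hd1 Hd2 eta Heta)
      as [dk [Hdk Kk]].
    pose proof (cond_pos dp1); pose proof (cond_pos dp2).
    assert (Hpos : 0 < Rmin dp1 (Rmin dp2 dk)) by (repeat apply Rmin_pos; lra).
    exists (mkposreal _ Hpos). intros h Hh0 Hh. simpl in Hh.
    pose proof (Rmin_l dp1 (Rmin dp2 dk)). pose proof (Rmin_r dp1 (Rmin dp2 dk)).
    pose proof (Rmin_l dp2 dk). pose proof (Rmin_r dp2 dk).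
    specialize (Hdp1 h Hh0 ltac:(lra)). specialize (Hdp2 h Hh0 ltac:(lra)).
    destruct (Kk h ltac:(lra)) as [e1 [e2 [He1 [He2 [F1 F2]]]]].
    rewrite Rplus_0_l, E1, E2 in Hdp1, Hdp2.
    set (q1 := (g1 h * cos (g2 h) - r0 * cos th0) / h) in *.
    set (q2 := (g1 h * sin (g2 h) - r0 * sin th0) / h) in *.
    destruct (near_bound _ _ _ Hdp1) as [N1 M1]. destruct (near_bound _ _ _ Hdp2) as [N2 M2].
    split.
    - rewrite F1.
      replace (((fst L + e1) * (g1 h * cos (g2 h) - r0 * cos th0) -
          (snd L + e2) * (g1 h * sin (g2 h) - r0 * sin th0)) / h - fst (cmul L p))
        with (e1 * q1 + (- e2) * q2 + fst L * (q1 - fst p) + (- snd L) * (q2 - snd p))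
        by (unfold q1, q2, cmul; simpl; field; exact Hh0).
      eapply Rle_lt_trans.
      { apply (bound4 _ _ _ _ _ _ _ _ eta (Rabs (fst p) + 1) (Rabs (snd p) + 1));
          try rewrite Rabs_Ropp; lra. }
      rewrite Rabs_Ropp. fold K. lra.
    - rewrite F2.
      replace (((fst L + e1) * (g1 h * sin (g2 h) - r0 * sin th0) +
          (snd L + e2) * (g1 h * cos (g2 h) - r0 * cos th0)) / h - snd (cmul L p))
        with (e1 * q2 + e2 * q1 + fst L * (q2 - snd p) + snd L * (q1 - fst p))
        by (unfold q1, q2, cmul; simpl; field; exact Hh0).
      eapply Rle_lt_trans.
      { apply (bound4 _ _ _ _ _ _ _ _ eta (Rabs (snd p) + 1) (Rabs (fst p) + 1)); lra. }
      replace (eta * (Rabs (snd p) + 1 + (Rabs (fst p) + 1) + Rabs (fst L) + Rabs (snd L)))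
        with (eta * K) by (unfold K; ring). lra. }
  split; intros eps Heps; destruct (MAIN eps Heps) as [del Hdel]; exists del;
    intros h Hh0 Hh; rewrite Rplus_0_l, E1, E2; apply (Hdel h Hh0 Hh).
Qed.

Lemma z_nz r0 lam phi : 0 < r0 -> 0 < lam -> (lam * cos phi, r0 * (lam * sin phi)) <> (0,0).
Proof.
  intros Hr Hl E. injection E as E1 E2.
  pose proof (sin2_cos2 phi). unfold Rsqr in H.
  assert (cos phi = 0) by (apply (Rmult_eq_reg_l lam); lra).
  assert (sin phi = 0) by (apply (Rmult_eq_reg_l (r0 * lam)); [lra|nra]).
  rewrite H0, H1 in H. lra.
Qed.

Lemma E_nz th : (cos th, sin th) <> (0,0).
Proof. intro E; injection E as E1 E2. pose proof (sin2_cos2 th). unfold Rsqr in H.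
  rewrite E1, E2 in H. lra. Qed.

Lemma cnorm_z r0 lam phi : 0 < lam ->
  cnorm (lam * cos phi, r0 * (lam * sin phi)) = lam * sqrt (cos phi ^ 2 + r0 ^ 2 * sin phi ^ 2).
Proof.
  intro Hl. unfold cnorm; simpl fst; simpl snd.
  replace ((lam * cos phi) ^ 2 + (r0 * (lam * sin phi)) ^ 2)
    with (lam ^ 2 * (cos phi ^ 2 + r0 ^ 2 * sin phi ^ 2)) by ring.
  rewrite sqrt_mult by (try apply pow2_ge_0; pose proof (pow2_ge_0 (cos phi));
     pose proof (pow2_ge_0 (r0 * sin phi)); nra).
  rewrite sqrt_pow2 by lra. reflexivity.
Qed.

Lemma sq_pos r0 phi : 0 < r0 -> 0 < sqrt (cos phi ^ 2 + r0 ^ 2 * sin phi ^ 2).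
Proof.
  intro Hr. apply sqrt_lt_R0. pose proof (sin2_cos2 phi). unfold Rsqr in H.
  destruct (Req_dec (cos phi) 0) as [E|E].
  - rewrite E in *. assert (sin phi * sin phi = 1) by lra. nra.
  - pose proof (pow2_ge_0 (r0 * sin phi)). assert (0 < cos phi ^ 2).
    { simpl. rewrite Rmult_1_r. apply Rsqr_pos_lt in E. exact E. } nra.
Qed.

Theorem proposition4
  (D : R -> R -> Prop) (f : R -> R -> R * R) (r0 th0 : R) (L : R * R)
  (a1 a2 : R) (g11 g12 g21 g22 : R -> R)
  (lam1 lam2 phi1 phi2 : R) :
  open_in_H D -> D r0 th0 ->
  polar_analytic D f ->
  has_Dpol D f r0 th0 L -> L <> (0, 0) ->
  C1_curve_in D a1 g11 g12 -> C1_curve_in D a2 g21 g22 ->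
  g11 0 = r0 -> g12 0 = th0 -> g21 0 = r0 -> g22 0 = th0 ->
  0 < lam1 -> 0 < lam2 ->
  - (PI / 2) < phi1 <= PI / 2 -> - (PI / 2) < phi2 <= PI / 2 ->
  derivable_pt_lim g11 0 (lam1 * cos phi1) ->
  derivable_pt_lim g12 0 (lam1 * sin phi1) ->
  derivable_pt_lim g21 0 (lam2 * cos phi2) ->
  derivable_pt_lim g22 0 (lam2 * sin phi2) ->
  exists w1 w2 : R * R,
    derivable_pt_lim (fun t => fst (f (g11 t) (g12 t))) 0 (fst w1) /\
    derivable_pt_lim (fun t => snd (f (g11 t) (g12 t))) 0 (snd w1) /\
    derivable_pt_lim (fun t => fst (f (g21 t) (g22 t))) 0 (fst w2) /\
    derivable_pt_lim (fun t => snd (f (g21 t) (g22 t))) 0 (snd w2) /\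
    w1 <> (0, 0) /\ w2 <> (0, 0) /\
    cos (vec_angle w1 w2) =
      (cos phi1 * cos phi2 + r0 ^ 2 * sin phi1 * sin phi2) /
      (sqrt (cos phi1 ^ 2 + r0 ^ 2 * sin phi1 ^ 2) *
       sqrt (cos phi2 ^ 2 + r0 ^ 2 * sin phi2 ^ 2)) /\
    (r0 = 1 ->
     vec_angle w1 w2 =
       vec_angle (lam1 * cos phi1, lam1 * sin phi1)
                 (lam2 * cos phi2, lam2 * sin phi2)).
Proof.
  intros [Dpos _] HD0 _ HL HLnz [Ha1 [h1' [h2' Hc1]]] [Ha2 [k1' [k2' Hc2]]]
    E11 E12 E21 E22 Hl1 Hl2 _ _ Hd11 Hd12 Hd21 Hd22.
  pose proof (Dpos _ _ HD0) as Hr0.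
  assert (HDa : forall t, -a1 < t < a1 -> D (g11 t) (g12 t)) by (intros t Ht; apply (Hc1 t Ht)).
  assert (HDb : forall t, -a2 < t < a2 -> D (g21 t) (g22 t)) by (intros t Ht; apply (Hc2 t Ht)).
  destruct (chain D f r0 th0 L a1 g11 g12 _ _ Dpos Hr0 HL Ha1 HDa E11 E12 Hd11 Hd12) as [A1 A2].
  destruct (chain D f r0 th0 L a2 g21 g22 _ _ Dpos Hr0 HL Ha2 HDb E21 E22 Hd21 Hd22) as [B1 B2].
  set (z1 := (lam1 * cos phi1, r0 * (lam1 * sin phi1))) in *.
  set (z2 := (lam2 * cos phi2, r0 * (lam2 * sin phi2))) in *.
  eexists; eexists; split; [exact A1|]; split; [exact A2|]; split; [exact B1|]; split; [exact B2|].
  assert (Z1 : z1 <> (0,0)) by (apply z_nz; lra).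
  assert (Z2 : z2 <> (0,0)) by (apply z_nz; lra).
  pose proof (E_nz th0) as EE.
  assert (EZ1 := cmul_nz _ _ EE Z1). assert (EZ2 := cmul_nz _ _ EE Z2).
  assert (RA : vec_angle (cmul L (cmul (cos th0, sin th0) z1)) (cmul L (cmul (cos th0, sin th0) z2))
             = acos (dot2 z1 z2 / (cnorm z1 * cnorm z2))).
  { unfold vec_angle. rewrite (ratio_cmul _ _ _ HLnz EZ1 EZ2), (ratio_cmul _ _ _ EE Z1 Z2).
    reflexivity. }
  split; [apply cmul_nz; auto|]. split; [apply cmul_nz; auto|].
  split.
  - rewrite RA, cos_acos by (apply ratio_bound; auto).
    unfold z1, z2. rewrite !cnorm_z by lra. unfold dot2; simpl fst; simpl snd.
    pose proof (sq_pos r0 phi1 Hr0); pose proof (sq_pos r0 phi2 Hr0).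
    field. split; lra.
  - intro H1. rewrite RA. unfold z1, z2. rewrite H1, !Rmult_1_l. reflexivity.
Qed.
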